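(* Let $X\in G$, let $(s_1,\ldots,s_k)$ be an oriented path in $\Gamma_X$ starting at a vertex $Y$, and let $\alpha=s_1\cdots s_k\in P$. (1) If $\alpha\preccurlyeq Y^\circ$, then $(s_1,\ldots,s_k)$ is an oriented black path. (2) If $\alpha\preccurlyeq (Y^{-1})^\circ$, then $(s_1,\ldots,s_k)$ is an oriented grey path.
   Context: $G$ is a Garside group: it has a lattice order $\preccurlyeq$ invariant under left multiplication ($a\preccurlyeq b$ iff $a^{-1}b\in P$, where $P=\{p\in G:1\preccurlyeq p\}$), with meet $\wedge$; there is a Garside element $\Delta\in P$ such that $[1,\Delta]$ is finite and generates $G$ and $\Delta^{-1}P\Delta=P$; and $P$ is atomic. Elements of $[1,\Delta]$ are simple. $\tau(x)=\Delta^{-1}x\Delta$; $X^a=a^{-1}Xa$. Left normal form $X=\Delta^p x_1\cdots x_r$: $p$ maximal with $\Delta^p\preccurlyeq X$, each $x_i\neq 1$ the maximal simple prefix of $x_i\cdots x_r$; $\inf X=p$, $\sup X=p+r$. $\iota(X)=\tau^{-p}(x_1)$ if $r>0$, $\iota(\Delta^p)=1$. $Y^\circ=Y\Delta^{-\inf Y}$. $\mathbf c(X)=X^{\iota(X)}$. $SSS(X)$: conjugates of $X$ of maximal infimum and minimal supremum; $USS(X)$: those $Y\in SSS(X)$ with $\mathbf c^m(Y)=Y$ for some $m>0$. A minimal simple element for $Y\in USS(X)$ is a simple $s\neq1$ with $Y^s\in USS(X)$ such that no prefix $t\ne1$, $t\neq s$ of $s$ has $Y^t\in USS(X)$. $\Gamma_X$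 is the directed graph with vertex set $USS(X)$ and an arrow labeled $s$ from $Y$ to $Y^s$ for each $Y\in USS(X)$ and each minimal simple element $s$ for $Y$. An arrow $s$ starting at $Y$ is black if $s\preccurlyeq\iota(Y)$ and grey if $s\preccurlyeq\iota(Y^{-1})$ (it may be both). An oriented path is a sequence of arrows $(s_1,\ldots,s_k)$, each starting at the endpoint of the previous one; it is black (grey) if all its arrows are black (grey). *)

(* Defs.v *)
From Stdlib Require Import ZArith List ClassicalEpsilon.
Import ListNotations.
Set Implicit Arguments.
Open Scope Z_scope.

Definition zpow_gen {T : Type} (mul : T -> T -> T) (one : T) (inv : T -> T)
  (g : T) (p : Z) : T :=
  match p with
  | Z0 => one
  | Zpos n => Nat.iter (Pos.to_nat n) (fun x => mul x g) one
  | Zneg n => Nat.iter (Pos.to_nat n) (fun x => mul x (inv g)) one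
  end.

Definition lprod_gen {T : Type} (mul : T -> T -> T) (one : T) (l : list T) : T :=
  fold_right mul one l.

Record GarsideGroup := {
  carrier :> Type;
  mul : carrier -> carrier -> carrier;
  one : carrier;
  inv : carrier -> carrier;
  mulA : forall a b c, mul a (mul b c) = mul (mul a b) c;
  mul1l : forall a, mul one a = a;
  mul1r : forall a, mul a one = a;
  mulVl : forall a, mul (inv a) a = one;
  mulVr : forall a, mul a (inv a) = one;
  (* positive cone P; a ≼ b iff a^-1 b ∈ P *)
  Pos : carrier -> Prop;
  (* ≼ is a partial order *)
  Pos_one : Pos one;
  Pos_mul : forall a b, Pos a -> Pos b -> Pos (mul a b);
  Pos_antisym : forall a, Pos a -> Pos (inv a) -> a = one;
  meet : carrier -> carrier -> carrier;
  meet_l : forall a b, Pos (mul (inv (meet a b)) a);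
  meet_r : forall a b, Pos (mul (inv (meet a b)) b);
  meet_glb : forall a b c, Pos (mul (inv c) a) -> Pos (mul (inv c) b) ->
                           Pos (mul (inv c) (meet a b));
  join_ex : forall a b, exists c, Pos (mul (inv a) c) /\ Pos (mul (inv b) c) /\
              (forall d, Pos (mul (inv a) d) -> Pos (mul (inv b) d) -> Pos (mul (inv c) d));
  Delta : carrier;
  Pos_Delta : Pos Delta;
  simples_finite : exists l : list carrier, forall s,
      Pos s -> Pos (mul (inv s) Delta) -> In s l;
  simples_generate : forall g, exists l : list (bool * carrier),
      (forall bs : bool * carrier, In bs l -> Pos (snd bs) /\ Pos (mul (inv (snd bs)) Delta)) /\
      g = lprod_gen mul one (map (fun bs : bool * carrier => if fst bs then snd bs else inv (snd bs)) l);
  conj_Delta_sub : forall p, Pos p -> Pos (mul (inv Delta) (mul p Delta));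
  conj_Delta_sup : forall q, Pos q -> exists p, Pos p /\ q = mul (inv Delta) (mul p Delta);
  atomic : forall p, Pos p -> exists N : nat, forall l : list carrier,
      (forall a, In a l -> Pos a /\ a <> one) -> lprod_gen mul one l = p ->
      (length l <= N)%nat
}.

Arguments mul {g0}.
Arguments one {g0}.
Arguments inv {g0}.
Arguments Pos {g0}.
Arguments Delta {g0}.
Arguments meet {g0}.

Section Garside.
Context {G : GarsideGroup}.

Definition zpow (a : G) (p : Z) : G := zpow_gen mul one inv a p.
Definition lprod (l : list G) : G := lprod_gen mul one l.

Definition prec (a b : G) : Prop := Pos (mul (inv a) b).

Definition conj (X a : G) : G := mul (inv a) (mul X a).

Definition tau_pow (k : Z) (x : G) : G := conj x (zpow Delta k).

Definition simple (s : G) : Prop := prec one s /\ prec s Delta.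

Definition max_simple_prefix (s a : G) : Prop :=
  simple s /\ prec s a /\ forall t, simple t -> prec t a -> prec t s.

Fixpoint nf_tail (a : G) (xs : list G) : Prop :=
  match xs with
  | [] => a = one
  | x :: xs' => x <> one /\ max_simple_prefix x a /\ nf_tail (mul (inv x) a) xs'
  end.

Definition lnf (X : G) (p : Z) (xs : list G) : Prop :=
  prec (zpow Delta p) X /\ (forall q, prec (zpow Delta q) X -> q <= p) /\
  nf_tail (mul (zpow Delta (- p)) X) xs.

Definition nf (X : G) : Z * list G :=
  epsilon (inhabits (0, @nil G)) (fun pr => lnf X (fst pr) (snd pr)).

Definition inf (X : G) : Z := fst (nf X).
Definition sup (X : G) : Z := fst (nf X) + Z.of_nat (length (snd (nf X))).

Definition iota (X : G) : G :=
  match snd (nf X) with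
  | [] => one
  | x1 :: _ => tau_pow (- inf X) x1
  end.

Definition circ (Y : G) : G := mul Y (zpow Delta (- inf Y)).

Definition cyc (X : G) : G := conj X (iota X).

Definition conjugate (Y X : G) : Prop := exists a, Y = conj X a.

Definition SSS (X Y : G) : Prop :=
  conjugate Y X /\ forall Z, conjugate Z X -> inf Z <= inf Y /\ sup Y <= sup Z.

Definition USS (X Y : G) : Prop :=
  SSS X Y /\ exists m : nat, (0 < m)%nat /\ Nat.iter m cyc Y = Y.

Definition minimal_simple (X Y s : G) : Prop :=
  USS X Y /\ simple s /\ s <> one /\ USS X (conj Y s) /\
  forall t, prec one t -> prec t s -> t <> one -> t <> s -> ~ USS X (conj Y t).

(* oriented path in Gamma_X starting at Y, given by its labels *)
Fixpoint oriented_path (X Y : G) (ss : list G) : Prop :=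
  match ss with
  | [] => USS X Y
  | s :: ss' => minimal_simple X Y s /\ oriented_path X (conj Y s) ss'
  end.

Definition black_arrow (Y s : G) : Prop := prec s (iota Y).
Definition grey_arrow (Y s : G) : Prop := prec s (iota (inv Y)).

Fixpoint black_path (Y : G) (ss : list G) : Prop :=
  match ss with
  | [] => True
  | s :: ss' => black_arrow Y s /\ black_path (conj Y s) ss'
  end.

Fixpoint grey_path (Y : G) (ss : list G) : Prop :=
  match ss with
  | [] => True
  | s :: ss' => grey_arrow Y s /\ grey_path (conj Y s) ss'
  end.

End Garside.

(* Main.v *)
Require Import Defs.
From Stdlib Require Import ZArith List Lia Classical ClassicalEpsilon.
Import ListNotations.
Open Scope Z_scope.

Section S.
Context {G : GarsideGroup}.
Local Infix "**" := mul (at level 40, left associativity).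

Lemma mulKl (a b : G) : inv a ** (a ** b) = b.
Proof. rewrite mulA, mulVl, mul1l. reflexivity. Qed.
Lemma mulKr (a b : G) : a ** (inv a ** b) = b.
Proof. rewrite mulA, mulVr, mul1l. reflexivity. Qed.
Lemma mulKl' (a b : G) : b ** a ** inv a = b.
Proof. rewrite <- mulA, mulVr, mul1r. reflexivity. Qed.
Lemma mulKr' (a b : G) : b ** inv a ** a = b.
Proof. rewrite <- mulA, mulVl, mul1r. reflexivity. Qed.
Lemma inv_uniq (a b : G) : a ** b = one -> inv a = b.
Proof. intro H. rewrite <- (mulKl a b), H, mul1r. reflexivity. Qed.
Lemma inv_inv (a : G) : inv (inv a) = a.
Proof. apply inv_uniq. apply mulVl. Qed.
Lemma inv_mul (a b : G) : inv (a ** b) = inv b ** inv a.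
Proof. apply inv_uniq. rewrite mulA, mulKl', mulVr. reflexivity. Qed.
Lemma inv_one : inv (@one G) = one.
Proof. apply inv_uniq. apply mul1l. Qed.

Definition dp (k : Z) : G := zpow Delta k.

Lemma zpow_nat (g : G) n : zpow g (Z.of_nat n) = Nat.iter n (fun x => x ** g) one.
Proof.
  destruct n. reflexivity.
  unfold zpow, zpow_gen. simpl. rewrite SuccNat2Pos.id_succ. reflexivity.
Qed.
Lemma zpow_negnat (g : G) n : zpow g (- Z.of_nat n) = Nat.iter n (fun x => x ** inv g) one.
Proof.
  destruct n. reflexivity.
  unfold zpow, zpow_gen. simpl. rewrite SuccNat2Pos.id_succ. reflexivity.
Qed.

Lemma zpow_succ (g : G) z : zpow g (Z.succ z) = zpow g z ** g.
Proof.
  assert (exists n, z = Z.of_nat n \/ z = - Z.of_nat n) as [n [-> | ->]].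
  { destruct (Z.le_gt_cases 0 z).
    - exists (Z.to_nat z). left. lia.
    - exists (Z.to_nat (-z)). right. lia. }
  - rewrite <- Nat2Z.inj_succ, !zpow_nat. reflexivity.
  - destruct n.
    + simpl. unfold zpow, zpow_gen. simpl. reflexivity.
    + replace (Z.succ (- Z.of_nat (S n))) with (- Z.of_nat n) by lia.
      rewrite !zpow_negnat. simpl. rewrite mulKr'. reflexivity.
Qed.

Lemma zpow_pred (g : G) z : zpow g (Z.pred z) = zpow g z ** inv g.
Proof.
  rewrite <- (Z.succ_pred z) at 2. rewrite zpow_succ, mulKl'. reflexivity.
Qed.

Lemma zpow_add (g : G) a b : zpow g (a + b) = zpow g a ** zpow g b.
Proof.
  induction b using Z.peano_ind.
  - rewrite Z.add_0_r. unfold zpow at 3. simpl. rewrite mul1r. reflexivity.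
  - rewrite Z.add_succ_r, !zpow_succ, IHb, mulA. reflexivity.
  - rewrite Z.add_pred_r, !zpow_pred, IHb, mulA. reflexivity.
Qed.

Lemma zpow0 (g : G) : zpow g 0 = one.
Proof. reflexivity. Qed.
Lemma zpow1 (g : G) : zpow g 1 = g.
Proof. unfold zpow, zpow_gen. simpl. apply mul1l. Qed.

Lemma zpow_opp (g : G) z : zpow g (- z) = inv (zpow g z).
Proof.
  symmetry. apply inv_uniq. rewrite <- zpow_add, Z.add_opp_diag_r. reflexivity.
Qed.


Lemma dp_add a b : dp (a + b) = dp a ** dp b.
Proof. apply zpow_add. Qed.
Lemma dp_opp a : dp (- a) = inv (dp a).
Proof. apply zpow_opp. Qed.
Lemma dp0 : dp 0 = one.
Proof. reflexivity. Qed.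
Lemma dp1 : dp 1 = Delta.
Proof. apply zpow1. Qed.

Lemma conj_mul_r (a b c : G) : conj a (b ** c) = conj (conj a b) c.
Proof. unfold conj. rewrite inv_mul. rewrite !mulA. reflexivity. Qed.
Lemma conj_mul_l (a b c : G) : conj (a ** b) c = conj a c ** conj b c.
Proof. unfold conj. rewrite !mulA, mulKl'. reflexivity. Qed.
Lemma conj_inv (a c : G) : conj (inv a) c = inv (conj a c).
Proof. unfold conj. rewrite !inv_mul, inv_inv, !mulA. reflexivity. Qed.
Lemma conj_one_r (a : G) : conj a one = a.
Proof. unfold conj. rewrite inv_one, mul1l, mul1r. reflexivity. Qed.
Lemma conj_K (a c : G) : conj (conj a c) (inv c) = a.
Proof. unfold conj. rewrite inv_inv, !mulA, mulVr, mul1l, mulKl'. reflexivity. Qed.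
Lemma conj_K' (a c : G) : conj (conj a (inv c)) c = a.
Proof. rewrite <- (inv_inv c) at 2. apply conj_K. Qed.
Lemma conj_comm (a c : G) : c ** conj a c = a ** c.
Proof. unfold conj. apply mulKr. Qed.

Lemma Delta_dp_comm k : Delta ** dp k = dp k ** Delta.
Proof. rewrite <- dp1, <- !dp_add, Z.add_comm. reflexivity. Qed.
Lemma conj_Delta_dp k : conj Delta (dp k) = Delta.
Proof. unfold conj. rewrite Delta_dp_comm. apply mulKl. Qed.

Lemma Pos_conj_D k : forall p, Pos p -> Pos (conj p (dp k)).
Proof.
  induction k using Z.peano_ind; intros p Hp.
  - unfold dp. rewrite zpow0, conj_one_r. exact Hp.
  - unfold dp in *. rewrite zpow_succ, conj_mul_r. apply conj_Delta_sub. auto.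
  - unfold dp in *. rewrite zpow_pred, conj_mul_r.
    destruct (conj_Delta_sup _ _ (IHk p Hp)) as [q [Hq ->]].
    unfold conj. rewrite inv_inv, !mulA, mulVr, mul1l, mulKl'. exact Hq.
Qed.

Lemma prec_refl (a : G) : prec a a.
Proof. unfold prec. rewrite mulVl. apply Pos_one. Qed.
Lemma prec_trans (a b c : G) : prec a b -> prec b c -> prec a c.
Proof.
  unfold prec. intros H1 H2. replace (inv a ** c) with ((inv a ** b) ** (inv b ** c)).
  apply Pos_mul; auto. rewrite <- mulA, mulKr. reflexivity.
Qed.
Lemma prec_antisym (a b : G) : prec a b -> prec b a -> a = b.
Proof.
  unfold prec. intros H1 H2.
  assert (inv a ** b = one).
  { apply Pos_antisym; auto. rewrite inv_mul, inv_inv. auto. }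
  rewrite <- (mulKr a b), H, mul1r. reflexivity.
Qed.
Lemma prec_mul_l (c a b : G) : prec a b -> prec (c ** a) (c ** b).
Proof. unfold prec. rewrite inv_mul, <- mulA, mulKl. auto. Qed.
Lemma prec_mul_l_inv (c a b : G) : prec (c ** a) (c ** b) -> prec a b.
Proof. unfold prec. rewrite inv_mul, <- mulA, mulKl. auto. Qed.
Lemma prec_ext (a b c : G) : prec a b -> Pos c -> prec a (b ** c).
Proof. unfold prec. intros. rewrite mulA. apply Pos_mul; auto. Qed.
Lemma prec_self_ext (a c : G) : Pos c -> prec a (a ** c).
Proof. intros. apply prec_ext; auto. apply prec_refl. Qed.
Lemma prec1 (a : G) : prec one a <-> Pos a.
Proof. unfold prec. rewrite inv_one, mul1l. tauto. Qed.
Lemma prec_one_pos (a : G) : Pos a -> prec a one -> a = one.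
Proof. intros H1 H2. apply prec_antisym; auto. apply prec1; auto. Qed.
Lemma prec_conj (a b : G) k : prec a b -> prec (conj a (dp k)) (conj b (dp k)).
Proof. unfold prec. intros H. rewrite <- conj_inv, <- conj_mul_l. apply Pos_conj_D. auto. Qed.
Lemma Pos_dp_nat n : Pos (dp (Z.of_nat n)).
Proof.
  induction n. apply Pos_one.
  rewrite Nat2Z.inj_succ. unfold dp in *. rewrite zpow_succ. apply Pos_mul; auto. apply Pos_Delta.
Qed.
Lemma Pos_dp k : 0 <= k -> Pos (dp k).
Proof. intros. replace k with (Z.of_nat (Z.to_nat k)) by lia. apply Pos_dp_nat. Qed.

Lemma dp_neg_not_pos k : k < 0 -> Pos (dp k) -> @Delta G = one.
Proof.
  intros Hk H. apply Pos_antisym. apply Pos_Delta.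
  rewrite <- dp1, <- dp_opp. replace (- (1)) with (k + (-1 - k)) by lia.
  rewrite dp_add. apply Pos_mul; auto. apply Pos_dp. lia.
Qed.

Lemma simple_pos (s : G) : simple s -> Pos s.
Proof. intros [H _]. apply prec1. auto. Qed.
Lemma simple_conj (s : G) k : simple s -> simple (conj s (dp k)).
Proof.
  intros [H1 H2]. split.
  - apply prec1. apply Pos_conj_D. apply prec1; auto.
  - rewrite <- (conj_Delta_dp k). apply prec_conj. auto.
Qed.
Lemma simple_Delta : simple (@Delta G).
Proof. split. apply prec1, Pos_Delta. apply prec_refl. Qed.
Lemma simple_one_Delta (s : G) : simple s -> s <> one -> @Delta G <> one.
Proof.
  intros [H1 H2] Hs HD. apply Hs. apply prec_antisym; auto. rewrite <- HD. auto.
Qed.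


Lemma lprod_cons (x : G) l : lprod (x :: l) = x ** lprod l.
Proof. reflexivity. Qed.
Lemma lprod_nil : lprod (@nil G) = one.
Proof. reflexivity. Qed.
Lemma lprod_app (l1 l2 : list G) : lprod (l1 ++ l2) = lprod l1 ** lprod l2.
Proof.
  induction l1; simpl. rewrite mul1l; reflexivity.
  change (a ** lprod (l1 ++ l2) = a ** lprod l1 ** lprod l2).
  rewrite IHl1, mulA. reflexivity.
Qed.
Lemma Pos_lprod (l : list G) : Forall simple l -> Pos (lprod l).
Proof.
  induction 1. apply Pos_one. rewrite lprod_cons. apply Pos_mul; auto. apply simple_pos; auto.
Qed.

Definition Ms (a : G) := exists l, Forall simple l /\ a = lprod l.

Lemma Ms_mul a b : Ms a -> Ms b -> Ms (a ** b).
Proof.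
  intros [l1 [H1 ->]] [l2 [H2 ->]]. exists (l1 ++ l2). split.
  apply Forall_app; auto. rewrite lprod_app; auto.
Qed.
Lemma Ms_one : Ms one.
Proof. exists nil. split; auto. Qed.
Lemma Ms_simple s : simple s -> Ms s.
Proof. intros. exists [s]. split. auto. simpl. unfold lprod; simpl. rewrite mul1r. auto. Qed.

Lemma dp_nat_lprod n : dp (Z.of_nat n) = lprod (repeat (@Delta G) n).
Proof.
  induction n. reflexivity.
  simpl repeat. rewrite lprod_cons, <- IHn, <- dp1, <- dp_add. f_equal. lia.
Qed.

Lemma generate_form (g : G) : exists (m : nat) t, Forall simple t /\ g = dp (- Z.of_nat m) ** lprod t.
Proof.
  destruct (simples_generate G g) as [l [Hl ->]].
  induction l as [|[b s] l IH].
  - exists O, nil. split; auto. simpl. unfold dp, zpow; simpl. rewrite mul1l. reflexivity.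
  - destruct IH as [m [t [Ht Heq]]].
    { intros bs Hbs. apply Hl. right. auto. }
    destruct (Hl (b, s) (or_introl eq_refl)) as [Hs1 Hs2]. simpl in Hs1, Hs2.
    change (exists m0 t0, Forall simple t0 /\
      (if b then s else inv s) ** lprod_gen mul one (map (fun bs : bool * G => if fst bs then snd bs else inv (snd bs)) l) =
      dp (- Z.of_nat m0) ** lprod t0).
    rewrite Heq. destruct b.
    + exists m, (conj s (dp (- Z.of_nat m)) :: t). split.
      * constructor; auto. apply simple_conj. split; auto. apply prec1; auto.
      * rewrite lprod_cons, !mulA, conj_comm. reflexivity.
    + exists (S m), (conj (inv s ** Delta) (dp (- Z.of_nat (S m))) :: t). split.
      * constructor; auto. apply simple_conj. split. apply prec1; auto.
        unfold prec. rewrite inv_mul, inv_inv, <- mulA. apply conj_Delta_sub. auto.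
      * rewrite lprod_cons, !mulA, conj_comm. rewrite <- (mulA _ (inv s) Delta), <- dp1, <- dp_add. do 3 f_equal. lia.
Qed.

Lemma div_simple (l : list G) : Forall simple l ->
  forall s, simple s -> prec s (lprod l) -> Ms (inv s ** lprod l).
Proof.
  induction 1 as [|t l Ht Hl IH]; intros s Hs Hsl.
  - rewrite lprod_nil in *. assert (s = one).
    { apply prec_one_pos; auto. apply simple_pos; auto. }
    subst. rewrite inv_one, mul1l. apply Ms_one.
  - rewrite lprod_cons in *.
    destruct (join_ex G s t) as [j [Hsj [Htj Hj]]].
    assert (HjD : prec j Delta) by (apply Hj; apply Hs || apply Ht).
    assert (Hjb : prec j (t ** lprod l)).
    { apply Hj. exact Hsl. apply prec_self_ext. apply Pos_lprod; auto. }
    set (r := inv t ** j).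
    assert (Hr : simple r).
    { split. apply prec1. exact Htj.
      unfold prec, r. rewrite inv_mul, inv_inv.
      replace (inv j ** t ** Delta) with ((inv j ** Delta) ** (inv Delta ** (t ** Delta))).
      apply Pos_mul. exact HjD. apply conj_Delta_sub. apply simple_pos; auto.
      rewrite !mulA, mulKl'. reflexivity. }
    assert (Hrl : prec r (lprod l)).
    { apply (prec_mul_l_inv t). unfold r. rewrite mulKr. auto. }
    specialize (IH r Hr Hrl).
    replace (inv s ** (t ** lprod l)) with ((inv s ** j) ** (inv r ** lprod l)).
    apply Ms_mul; auto. apply Ms_simple. split. apply prec1. exact Hsj.
    unfold prec. rewrite inv_mul, inv_inv.
    replace (inv j ** s ** Delta) with ((inv j ** Delta) ** (inv Delta ** (s ** Delta))).
    apply Pos_mul. exact HjD. apply conj_Delta_sub. apply simple_pos; auto.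
    rewrite !mulA, mulKl'. reflexivity.
    unfold r. rewrite inv_mul, inv_inv. rewrite !mulA, mulKl'. reflexivity.
Qed.

Lemma div_Ms (c b : G) : Ms c -> Ms b -> prec c b -> Ms (inv c ** b).
Proof.
  intros [lc [Hc ->]]. revert b. induction Hc as [|s l Hs Hl IH]; intros b Hb Hcb.
  - rewrite lprod_nil, inv_one, mul1l. auto.
  - rewrite lprod_cons in *. rewrite inv_mul, <- mulA.
    destruct Hb as [lb [Hlb ->]].
    apply IH.
    + apply div_simple; auto. eapply prec_trans; [|exact Hcb]. apply prec_self_ext. apply Pos_lprod; auto.
    + apply (prec_mul_l_inv s). rewrite mulKr. auto.
Qed.

Lemma Pos_Ms (a : G) : Pos a -> Ms a.
Proof.
  intros Ha. destruct (generate_form a) as [m [t [Ht Heq]]].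
  assert (a = inv (dp (Z.of_nat m)) ** lprod t) by (rewrite <- dp_opp; auto).
  rewrite H. apply div_Ms.
  - exists (repeat Delta m). split. apply Forall_forall. intros x Hx. apply repeat_spec in Hx. subst. apply simple_Delta.
    apply dp_nat_lprod.
  - exists t; auto.
  - unfold prec. rewrite <- H. auto.
Qed.

Lemma meet_ne1 (a : G) : Pos a -> a <> one -> meet a Delta <> one.
Proof.
  intros Ha Ha1 Hm. destruct (Pos_Ms a Ha) as [l [Hl ->]].
  induction Hl as [|t l Ht Hl IH].
  - apply Ha1; reflexivity.
  - rewrite lprod_cons in *. destruct (classic (t = one)) as [-> | Hne].
    + rewrite mul1l in *. apply IH; auto.
    + apply Hne. apply prec_one_pos. apply simple_pos; auto.
      rewrite <- Hm. apply meet_glb. apply prec_self_ext. apply Pos_lprod; auto. apply Ht.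
Qed.


Lemma meet_prefix (a : G) : Pos a -> max_simple_prefix (meet a Delta) a.
Proof.
  intros Ha. split; [split|split].
  - apply prec1. rewrite <- mul1l. rewrite <- inv_one. apply meet_glb.
    rewrite inv_one, mul1l; auto. rewrite inv_one, mul1l; apply Pos_Delta.
  - apply meet_r.
  - apply meet_l.
  - intros t [_ Ht] Hta. apply meet_glb; auto.
Qed.

Lemma nf_tail_exists_N (N : nat) : forall a : G, Pos a ->
  (forall l : list G, (forall x, In x l -> Pos x /\ x <> one) -> lprod_gen mul one l = a ->
     (length l <= N)%nat) -> exists xs, nf_tail a xs.
Proof.
  induction N; intros a Ha HN.
  - destruct (classic (a = one)) as [-> | Hne].
    + exists nil. reflexivity.
    + exfalso. specialize (HN [a]). simpl in HN.
      assert (1 <= 0)%nat; [|lia]. apply HN.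
      intros x [<- | []]. auto. apply mul1r.
  - destruct (classic (a = one)) as [-> | Hne].
    + exists nil. reflexivity.
    + set (x := meet a Delta).
      assert (Hx := meet_prefix a Ha).
      assert (Hx1 : x <> one) by (apply meet_ne1; auto).
      destruct (IHN (inv x ** a)) as [xs Hxs].
      * destruct Hx as [_ [H _]]. exact H.
      * intros l Hl Hprod.
        assert (length (x :: l) <= S N)%nat; [|simpl in *; lia].
        apply HN.
        { intros y [Hy | Hy]. rewrite <- Hy. split. apply prec1. destruct Hx as [[H1 _] _]; exact H1. exact Hx1. apply Hl, Hy. }
        simpl. fold (lprod l). unfold lprod in *. rewrite Hprod. apply mulKr.
      * exists (x :: xs). simpl. auto.
Qed.

Lemma nf_tail_exists (a : G) : Pos a -> exists xs, nf_tail a xs.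
Proof.
  intros Ha. destruct (atomic G a Ha) as [N HN].
  eapply nf_tail_exists_N; eauto.
Qed.

Lemma Zmax_exists (P : Z -> Prop) (n : nat) : forall a, P a ->
  (forall q, P q -> q <= a + Z.of_nat n) -> exists p, P p /\ forall q, P q -> q <= p.
Proof.
  induction n; intros a Ha Hb.
  - exists a. split; auto. intros q Hq. specialize (Hb q Hq). lia.
  - destruct (classic (exists q, P q /\ a < q)) as [[q [Hq Hlt]] | Hno].
    + apply (IHn q Hq). intros q' Hq'. specialize (Hb q' Hq'). lia.
    + exists a. split; auto. intros q Hq.
      destruct (Z.le_gt_cases q a); auto. exfalso. apply Hno. eauto.
Qed.

Lemma lnf_exists (Z : G) : @Delta G <> one -> exists p xs, lnf Z p xs.
Proof.
  intros HD.
  destruct (generate_form Z) as [m [t [Ht Heq]]].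
  set (T := lprod t).
  destruct (atomic G T (Pos_lprod t Ht)) as [N HN].
  assert (Hex : exists p, prec (dp p) Z /\ forall q, prec (dp q) Z -> q <= p).
  { apply (Zmax_exists _ N (- Z.of_nat m)).
    - unfold prec. rewrite Heq, <- dp_opp, Z.opp_involutive, mulA, <- dp_add, Z.add_opp_diag_r.
      rewrite dp0, mul1l. apply Pos_lprod; auto.
    - intros q Hq. destruct (Z.le_gt_cases (q + Z.of_nat m) 0). lia.
      set (n := Z.to_nat (q + Z.of_nat m)).
      set (e := inv (dp q) ** Z).
      assert (HT : T = lprod (repeat (@Delta G) n) ** e).
      { rewrite <- dp_nat_lprod. unfold n. rewrite Z2Nat.id by lia.
        unfold e. rewrite Z.add_comm, dp_add, Heq, !mulA, mulKl', <- dp_add, Z.add_opp_diag_r, dp0, mul1l. reflexivity. }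
      assert (HD1 : forall x : G, In x (repeat (@Delta G) n) -> Pos x /\ x <> one).
      { intros x Hx. apply repeat_spec in Hx. subst. split; auto. apply Pos_Delta. }
      destruct (classic (e = one)) as [He | He].
      + assert (Hl : (length (repeat (@Delta G) n) <= N)%nat).
        { apply HN. auto. fold (lprod (repeat (@Delta G) n)). rewrite HT, He, mul1r. reflexivity. }
        rewrite repeat_length in Hl. unfold n in Hl. lia.
      + assert (Hl : (length (repeat (@Delta G) n ++ [e]) <= N)%nat).
        { apply HN.
          - intros x Hx. apply in_app_or in Hx. destruct Hx as [Hx | [<- | []]]; auto.
          - fold (lprod (repeat (@Delta G) n ++ [e])). rewrite lprod_app, HT.
            unfold lprod at 3; simpl. rewrite mul1r. reflexivity. }
        rewrite length_app, repeat_length in Hl. simpl in Hl. unfold n in Hl. lia. }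
  destruct Hex as [p [Hp Hmax]].
  destruct (nf_tail_exists (dp (- p) ** Z)) as [xs Hxs].
  { rewrite dp_opp. exact Hp. }
  exists p, xs. split; auto.
Qed.

Lemma nf_spec (Z : G) : @Delta G <> one -> lnf Z (inf Z) (snd (nf Z)).
Proof.
  intros HD. unfold inf, nf.
  apply (epsilon_spec (inhabits (0, @nil G)) (fun pr => lnf Z (fst pr) (snd pr))).
  destruct (lnf_exists Z HD) as [p [xs H]]. exists (p, xs). exact H.
Qed.


Lemma nf_tail_lprod (xs : list G) : forall a, nf_tail a xs -> a = lprod xs /\ Forall simple xs.
Proof.
  induction xs as [|x xs IH]; intros a H.
  - simpl in H. subst. split; auto.
  - destruct H as [Hx1 [[Hs [Hxa _]] Ht]].
    destruct (IH _ Ht) as [Heq Hf]. split; auto.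
    rewrite lprod_cons, <- Heq, mulKr. reflexivity.
Qed.

Lemma conj_dpK (a : G) k : conj (conj a (dp (- k))) (dp k) = a.
Proof. rewrite dp_opp. apply conj_K'. Qed.
Lemma conj_dpK' (a : G) k : conj (conj a (dp k)) (dp (- k)) = a.
Proof. rewrite dp_opp. apply conj_K. Qed.

Lemma first_arrow (W s : G) : simple s -> s <> one -> prec s (circ W) -> prec s (iota W).
Proof.
  intros Hs Hs1 Hsc.
  assert (HD := simple_one_Delta s Hs Hs1).
  assert (Hnf := nf_spec W HD).
  unfold iota, circ, inf in *. destruct (nf W) as [p xs]. simpl in *.
  destruct Hnf as [Hp [Hmax Htl]].
  destruct xs as [|x xs].
  - simpl in Htl. exfalso. apply Hs1. apply prec_one_pos. apply simple_pos; auto.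
    replace one with (W ** dp (- p)); auto.
    change (dp (-p) ** W = one) in Htl.
    assert (HW : W = dp p).
    { rewrite <- (mulKl (dp (-p)) W), Htl, mul1r, <- dp_opp, Z.opp_involutive. reflexivity. }
    rewrite HW, <- dp_add, Z.add_opp_diag_r. reflexivity.
  - destruct Htl as [Hx1 [[Hxs [Hxa Hxmax]] _]].
    unfold tau_pow. set (c := dp (- p)).
    assert (Hcirc : W ** c = conj (c ** W) c).
    { unfold conj. rewrite <- mulA, mulKl. reflexivity. }
    change (prec s (W ** c)) in Hsc. change (prec s (conj x c)).
    rewrite Hcirc in Hsc.
    assert (Ht : prec (conj s (dp p)) x).
    { apply Hxmax. apply simple_conj; auto.
      apply (prec_conj _ _ p) in Hsc. unfold c in Hsc.
      rewrite conj_dpK in Hsc. exact Hsc. }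
    apply (prec_conj _ _ (- p)) in Ht.
    unfold c. rewrite conj_dpK' in Ht. exact Ht.
Qed.


Lemma step (W s L : G) : simple s -> Pos L -> inf (conj W s) <= inf W ->
  prec (s ** L) (circ W) -> prec L (circ (conj W s)).
Proof.
  intros Hs HL Hinf H. unfold circ, prec in *.
  set (p := inf W) in *. set (p' := inf (conj W s)) in *.
  change (Pos (inv (s ** L) ** (W ** dp (- p)))) in H.
  change (Pos (inv L ** (conj W s ** dp (- p')))).
  replace (inv L ** (conj W s ** dp (- p'))) with
    ((inv (s ** L) ** (W ** dp (- p))) ** conj s (dp (- p)) ** dp (p - p')).
  - apply Pos_mul. apply Pos_mul. exact H. apply Pos_conj_D. apply simple_pos; auto.
    apply Pos_dp. lia.
  - unfold conj, Z.sub. rewrite dp_add, !dp_opp, inv_inv, inv_mul. rewrite !mulA, !mulKr'. reflexivity.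
Qed.

Lemma lprod_le_dp (l : list G) : Forall simple l -> prec (lprod l) (dp (Z.of_nat (length l))).
Proof.
  induction 1 as [|x l Hx Hl IH].
  - apply prec_refl.
  - rewrite lprod_cons. simpl length. rewrite Nat2Z.inj_succ, <- Z.add_1_r, dp_add, dp1.
    eapply prec_trans. apply prec_mul_l. exact IH.
    rewrite <- conj_comm. apply prec_mul_l. rewrite <- (conj_Delta_dp (Z.of_nat (length l))).
    apply prec_conj. apply Hx.
Qed.

Lemma le_dp_sup (Z : G) : @Delta G <> one -> prec Z (dp (sup Z)).
Proof.
  intros HD. assert (H := nf_spec Z HD). unfold sup, inf in *.
  destruct (nf Z) as [p xs]. simpl in *. destruct H as [_ [_ Ht]].
  destruct (nf_tail_lprod xs _ Ht) as [Heq Hf].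
  replace Z with (dp p ** lprod xs).
  - rewrite dp_add. apply prec_mul_l. apply lprod_le_dp; auto.
  - change (dp (-p) ** Z = lprod xs) in Heq. rewrite <- Heq, dp_opp, mulKr. reflexivity.
Qed.

Lemma hd_step (w a x : G) : Pos w -> Pos a -> max_simple_prefix x a ->
  prec Delta (w ** a) -> prec Delta (w ** x).
Proof.
  intros Hw Ha [Hxs [Hxa Hxm]] HDa.
  destruct (join_ex G w Delta) as [j [Hwj [HDj Hj]]].
  assert (Hjwa : prec j (w ** a)) by (apply Hj; [apply prec_self_ext; auto | auto]).
  assert (HjwD : prec j (w ** Delta)).
  { apply Hj. apply prec_self_ext. apply Pos_Delta.
    unfold prec. apply conj_Delta_sub. auto. }
  set (f := inv w ** j).
  assert (Hf : prec f x).
  { apply Hxm. split. apply prec1. exact Hwj.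
    apply (prec_mul_l_inv w). unfold f. rewrite mulKr. auto.
    apply (prec_mul_l_inv w). unfold f. rewrite mulKr. auto. }
  eapply prec_trans. exact HDj. replace j with (w ** f). apply prec_mul_l. auto.
  unfold f. apply mulKr.
Qed.

Lemma hard (xs : list G) : forall a (k : nat), nf_tail a xs -> Pos a ->
  prec a (dp (Z.of_nat k)) -> (length xs <= k)%nat.
Proof.
  induction xs as [|x xs IH]; intros a k Ht Ha Hak.
  - simpl. lia.
  - destruct Ht as [Hx1 [Hxp Ht]].
    destruct Hxp as [Hxs [Hxa Hxm]].
    destruct k as [|k].
    + exfalso. apply Hx1. assert (a = one) by (apply prec_one_pos; auto).
      subst. apply prec_one_pos; auto. apply simple_pos; auto.
    + simpl. cut (length xs <= k)%nat. lia.
      set (a' := inv x ** a).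
      set (w := dp (Z.of_nat (S k)) ** inv a).
      assert (Hw : Pos w).
      { unfold w. replace (dp (Z.of_nat (S k)) ** inv a) with (conj (inv a ** dp (Z.of_nat (S k))) (dp (- Z.of_nat (S k)))).
        apply Pos_conj_D. exact Hak.
        unfold conj. rewrite dp_opp, inv_inv, !mulA, mulKl'. reflexivity. }
      assert (Hwa : w ** a = dp (Z.of_nat (S k))) by (unfold w; apply mulKr').
      assert (HDw : prec Delta (w ** x)).
      { apply (hd_step w a x); auto. split; auto. rewrite Hwa. unfold prec.
        rewrite Nat2Z.inj_succ, <- Z.add_1_l, dp_add, dp1, mulKl. apply Pos_dp_nat. }
      set (v := inv Delta ** (w ** x)).
      assert (Hva : v ** a' = dp (Z.of_nat k)).
      { unfold v, a'. rewrite !mulA, mulKl', <- mulA, Hwa.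
        rewrite Nat2Z.inj_succ, <- Z.add_1_l, dp_add, dp1, mulKl. reflexivity. }
      assert (Ha'e : a' = inv v ** dp (Z.of_nat k)) by (rewrite <- Hva, mulKl; reflexivity).
      apply (IH a'); auto.
      unfold prec. rewrite Ha'e, inv_mul, inv_inv.
      replace (inv (dp (Z.of_nat k)) ** v ** dp (Z.of_nat k)) with (conj v (dp (Z.of_nat k))).
      * apply Pos_conj_D. exact HDw.
      * unfold conj. rewrite mulA. reflexivity.
Qed.



Lemma sup_le (Z : G) r : @Delta G <> one -> prec Z (dp r) -> sup Z <= r.
Proof.
  intros HD HZ. assert (H := nf_spec Z HD). unfold sup, inf in *.
  destruct (nf Z) as [p xs]. simpl in *. destruct H as [Hp [_ Ht]].
  set (a := dp (- p) ** Z).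
  change (nf_tail a xs) in Ht.
  assert (Ha : Pos a) by (unfold a; rewrite dp_opp; exact Hp).
  assert (Har : Pos (inv a ** dp (r - p))).
  { unfold a. rewrite inv_mul, dp_opp, inv_inv. unfold Z.sub. rewrite dp_add, dp_opp, !mulA. rewrite <- (mulA _ (inv Z) (dp p) (dp r)), <- dp_add, <- dp_opp, <- mulA, <- dp_add. replace (p + r + - p) with r by lia. exact HZ. }
  destruct (Z.le_gt_cases 0 (r - p)).
  - assert (Hl := hard xs a (Z.to_nat (r - p)) Ht Ha).
    rewrite Z2Nat.id in Hl by lia. specialize (Hl Har). lia.
  - exfalso. apply HD. apply (dp_neg_not_pos (r - p)). lia.
    rewrite <- (mulKr a (dp (r - p))). apply Pos_mul; auto.
Qed.

Lemma prec_inv_dp (W : G) q : prec W (dp (- q)) -> prec (dp q) (inv W).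
Proof.
  unfold prec. intros H. replace (inv (dp q) ** inv W) with (conj (inv W ** dp (- q)) (dp q)).
  apply Pos_conj_D; auto. unfold conj. rewrite dp_opp, !mulA, mulKr'. reflexivity.
Qed.
Lemma prec_inv_dp' (W : G) q : prec (dp q) (inv W) -> prec W (dp (- q)).
Proof.
  unfold prec. intros H. replace (inv W ** dp (- q)) with (conj (inv (dp q) ** inv W) (dp (- q))).
  apply Pos_conj_D; auto. unfold conj. rewrite dp_opp, inv_inv, !mulA, mulVr, mul1l. reflexivity.
Qed.

Lemma inf_inv_step (X Y Y' : G) : @Delta G <> one -> USS X Y -> USS X Y' -> inf (inv Y') <= inf (inv Y).
Proof.
  intros HD [[HcY HY] _] [[HcY' HY'] _].
  assert (H1 : sup Y <= sup Y') by (apply HY; auto).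
  assert (H2 : sup Y' <= - inf (inv Y')).
  { apply sup_le; auto. apply prec_inv_dp'. destruct (nf_spec (inv Y') HD) as [Hp _]. exact Hp. }
  assert (H3 : - sup Y <= inf (inv Y)).
  { destruct (nf_spec (inv Y) HD) as [_ [Hmax _]]. apply Hmax.
    apply prec_inv_dp. rewrite Z.opp_involutive. apply le_dp_sup; auto. }
  lia.
Qed.

Lemma path_simple (X Y : G) ss : oriented_path X Y ss -> Forall simple ss.
Proof.
  revert Y. induction ss as [|s ss IH]; intros Y H. auto.
  destruct H as [[_ [Hs _]] H]. constructor; eauto.
Qed.

Lemma black_ind (X : G) ss : forall Y, oriented_path X Y ss ->
  prec (lprod ss) (circ Y) -> black_path Y ss.
Proof.
  induction ss as [|s ss IH]; intros Y Hp Hc. simpl; auto.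
  destruct Hp as [[HY [Hs [Hs1 [HY' _]]]] Hp]. simpl.
  assert (HD := simple_one_Delta s Hs Hs1).
  assert (HL : Pos (lprod ss)) by (apply Pos_lprod; eapply path_simple; eauto).
  rewrite lprod_cons in Hc. split.
  - apply first_arrow; auto. eapply prec_trans; [|exact Hc]. apply prec_self_ext; auto.
  - apply IH; auto. apply step; auto.
    destruct HY as [[_ HY] _]. apply HY. destruct HY' as [[Hc' _] _]. exact Hc'.
Qed.

Lemma grey_ind (X : G) ss : forall Y, oriented_path X Y ss ->
  prec (lprod ss) (circ (inv Y)) -> grey_path Y ss.
Proof.
  induction ss as [|s ss IH]; intros Y Hp Hc. simpl; auto.
  destruct Hp as [[HY [Hs [Hs1 [HY' _]]]] Hp]. simpl.
  assert (HD := simple_one_Delta s Hs Hs1).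
  assert (HL : Pos (lprod ss)) by (apply Pos_lprod; eapply path_simple; eauto).
  rewrite lprod_cons in Hc. split.
  - apply first_arrow; auto. eapply prec_trans; [|exact Hc]. apply prec_self_ext; auto.
  - apply IH; auto. rewrite <- conj_inv. apply step; auto.
    rewrite conj_inv. eapply inf_inv_step; eauto.
Qed.

End S.

Theorem mainTheorem5 (G : GarsideGroup) (X Y : G) (ss : list G) :
  oriented_path X Y ss ->
  (prec (lprod ss) (circ Y) -> black_path Y ss) /\
  (prec (lprod ss) (circ (inv Y)) -> grey_path Y ss).
Proof.
  intros H. split.
  - apply black_ind with X; auto.
  - apply grey_ind with X; auto.
Qed.
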